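(* Let $\eta=\frac1{20}$ and for $a,b>0$ define $$U(a,b)=\eta\,\mathbb E_{x\sim\mathcal N(b,1)}\Big[\big(\tanh(ax)-\tfrac12\tanh''(ax)a^2+\tanh'(ax)ax\big)x\Big]-\eta\,\mathbb E_{x\sim\mathcal N(b,1)}[\tanh'(ax)a]-\eta a.$$ If $a\in[30,\tfrac43b]$, then $|U(a,b)|\le\frac{a+b}{10}$. *)

(* Defs.v *)
From Stdlib Require Import Reals.
From Coquelicot Require Import Coquelicot.
Open Scope R_scope.

Definition tanh (x : R) : R := (exp x - exp (- x)) / (exp x + exp (- x)).

Definition gauss_density (b x : R) : R :=
  / sqrt (2 * PI) * exp (- ((x - b) ^ 2) / 2).

Definition gauss_expect (b : R) (f : R -> R) : R :=
  RInt_gen (fun x => f x * gauss_density b x)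
           (Rbar_locally m_infty) (Rbar_locally p_infty).

Definition eta : R := 1 / 20.

Definition U (a b : R) : R :=
  eta * gauss_expect b (fun x =>
      (tanh (a * x) - / 2 * Derive_n tanh 2 (a * x) * a ^ 2
        + Derive tanh (a * x) * a * x) * x)
  - eta * gauss_expect b (fun x => Derive tanh (a * x) * a)
  - eta * a.

(* Main.v *)
Require Import Defs.
From Stdlib Require Import Reals.
From Coquelicot Require Import Coquelicot.
Open Scope R_scope.
From Stdlib Require Import Lra.


Lemma ballR (x y e : R) : ball x e y <-> Rabs (y - x) < e.
Proof. reflexivity. Qed.

Section Dom.
Variables (f h H : R -> R) (Lm Lp : R).
Hypothesis Hf : forall x, continuous f x.
Hypothesis Hh : forall x, continuous h x.
Hypothesis HH : forall x, is_derive H x (h x).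
Hypothesis Hle : forall x, Rabs (f x) <= h x.
Hypothesis Hm : filterlim H (Rbar_locally m_infty) (locally Lm).
Hypothesis Hp : filterlim H (Rbar_locally p_infty) (locally Lp).

Lemma exf p q : ex_RInt f p q.
Proof. apply (ex_RInt_continuous (V:=R_CompleteNormedModule)); intros; apply Hf. Qed.
Lemma exh p q : ex_RInt h p q.
Proof. apply (ex_RInt_continuous (V:=R_CompleteNormedModule)); intros; apply Hh. Qed.

Lemma RInt_h p q : RInt h p q = H q - H p.
Proof.
  apply is_RInt_unique.
  apply (is_RInt_derive H h); intros; [apply HH | apply Hh].
Qed.

Lemma bnd_le p q : p <= q -> Rabs (RInt f p q) <= Rabs (H q - H p).
Proof.
  intros Hpq. rewrite <- RInt_h.
  eapply Rle_trans. apply abs_RInt_le; auto using exf.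
  eapply Rle_trans. 2: apply Rle_abs.
  apply RInt_le; [exact Hpq| | apply exh | intros; apply Hle].
  apply (ex_RInt_continuous (V:=R_CompleteNormedModule)); intros; apply continuous_comp; [apply Hf|].
  apply continuous_Rabs.
Qed.

Lemma bnd p q : Rabs (RInt f p q) <= Rabs (H q - H p).
Proof.
  destruct (Rle_or_lt p q) as [Hpq|Hpq]. now apply bnd_le.
  rewrite <- opp_RInt_swap by apply exf.
  change (Rabs (- RInt f q p) <= Rabs (H q - H p)).
  rewrite Rabs_Ropp. replace (H q - H p) with (- (H p - H q)) by ring.
  rewrite Rabs_Ropp. apply bnd_le; lra.
Qed.

Lemma isgen_h : is_RInt_gen h (Rbar_locally m_infty) (Rbar_locally p_infty) (Lp - Lm).
Proof.
  unshelve eapply (filterlimi_lim_ext (fun ab : R * R => H (snd ab) - H (fst ab))).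
  intros [p q]; simpl. apply (is_RInt_derive H h); intros; [apply HH | apply Hh].
  apply filterlim_locally. intros eps.
  assert (He : 0 < eps / 2) by (destruct eps; simpl; lra).
  pose proof (proj1 (filterlim_locally _ _) Hm (mkposreal _ He)) as A.
  pose proof (proj1 (filterlim_locally _ _) Hp (mkposreal _ He)) as B.
  eapply Filter_prod. exact A. exact B.
  intros x y Hx Hy. simpl in *. rewrite ballR in Hx, Hy.
  change (Rabs (H y - H x - (Lp - Lm)) < eps).
  replace (H y - H x - (Lp - Lm)) with ((H y - Lp) - (H x - Lm)) by ring.
  eapply Rle_lt_trans. apply Rabs_triang. rewrite Rabs_Ropp. lra.
Qed.

Lemma exgen_f : ex_RInt_gen f (Rbar_locally m_infty) (Rbar_locally p_infty).
Proof.
  assert (PF : ProperFilter (filter_prod (Rbar_locally m_infty) (Rbar_locally p_infty))).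
  { apply filter_prod_proper; apply Rbar_locally_filter. }
  destruct (proj1 (filterlim_locally_cauchy (fun ab => RInt f (fst ab) (snd ab)))) as [y Hy].
  - intros eps.
    assert (He : 0 < eps / 4) by (destruct eps; simpl; lra).
    pose proof (proj1 (filterlim_locally _ _) Hm (mkposreal _ He)) as A.
    pose proof (proj1 (filterlim_locally _ _) Hp (mkposreal _ He)) as B.
    exists (fun ab => ball Lm (eps/4) (H (fst ab)) /\ ball Lp (eps/4) (H (snd ab))).
    split.
    + eapply Filter_prod. exact A. exact B. intros; simpl; auto.
    + intros [u v] [u' v'] [H1 H2] [H3 H4]. simpl in *.
      rewrite ballR in *.
      rewrite <- (RInt_Chasles f u' u v') by apply exf.
      rewrite <- (RInt_Chasles f u v v') by apply exf.
      change (Rabs (RInt f u' u + (RInt f u v + RInt f v v') - RInt f u v) < eps).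
      replace (RInt f u' u + (RInt f u v + RInt f v v') - RInt f u v)
        with (RInt f u' u + RInt f v v') by ring.
      eapply Rle_lt_trans. apply Rabs_triang.
      pose proof (bnd u' u). pose proof (bnd v v').
      assert (Rabs (H u - H u') < eps / 2).
      { replace (H u - H u') with ((H u - Lm) - (H u' - Lm)) by ring.
        eapply Rle_lt_trans. apply Rabs_triang. rewrite Rabs_Ropp. lra. }
      assert (Rabs (H v' - H v) < eps / 2).
      { replace (H v' - H v) with ((H v' - Lp) - (H v - Lp)) by ring.
        eapply Rle_lt_trans. apply Rabs_triang. rewrite Rabs_Ropp. lra. }
      lra.
  - exists y. unshelve eapply (filterlimi_lim_ext (fun ab : R * R => RInt f (fst ab) (snd ab))).
    intros [p q]; simpl. apply (RInt_correct (V:=R_CompleteNormedModule)), exf.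
    exact Hy.
Qed.

Lemma dom_bound : Rabs (RInt_gen f (Rbar_locally m_infty) (Rbar_locally p_infty)) <= Lp - Lm.
Proof.
  apply (RInt_gen_norm (Fa := Rbar_locally m_infty) (Fb := Rbar_locally p_infty) f h _ _).
  - eapply Filter_prod with (Q := fun x => x < 0) (R := fun x => 0 < x).
    exists 0; auto. exists 0; auto. simpl; intros; lra.
  - eapply Filter_prod with (Q := fun x => True) (R := fun x => True).
    exists 0; auto. exists 0; auto. simpl; intros; apply Hle.
  - apply RInt_gen_correct. exact exgen_f.
  - exact isgen_h.
Qed.
End Dom.


Lemma atan_p : is_lim atan p_infty (PI/2).
Proof.
  apply is_lim_ext_loc with (fun x => PI/2 - atan (/x)).
  { exists 0; intros x Hx. rewrite atan_inv by lra. ring. }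
  assert (A : is_lim (fun x => atan (/x)) p_infty (atan 0)).
  { eapply is_lim_comp with (l := Finite 0).
    - apply is_lim_continuity. apply derivable_continuous_pt.
      exists (/ (1 + 0 ^ 2)). apply derivable_pt_lim_atan.
    - replace (Finite 0) with (Rbar_inv p_infty) by reflexivity.
      apply is_lim_inv. apply is_lim_id. discriminate.
    - exists 0; intros x Hx E. injection E. apply Rinv_neq_0_compat; lra. }
  rewrite atan_0 in A.
  replace (Finite (PI/2)) with (Finite (PI/2 - 0)) by (f_equal; ring).
  apply is_lim_minus'. apply is_lim_const. exact A.
Qed.

Lemma atan_m : is_lim atan m_infty (-(PI/2)).
Proof.
  apply is_lim_ext_loc with (fun x => - atan (- x)).
  { exists 0; intros x Hx. rewrite atan_opp. ring. }
  replace (Finite (- (PI/2))) with (Rbar_opp (PI/2)) by reflexivity.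
  apply is_lim_opp.
  eapply is_lim_comp. apply atan_p.
  replace p_infty with (Rbar_opp m_infty) by reflexivity.
  apply is_lim_opp, is_lim_id.
  exists 0; intros; discriminate.
Qed.

Lemma lin_p s x0 : 0 < s -> is_lim (fun x => s * (x - x0)) p_infty p_infty.
Proof.
  intros Hs P [M HM]. exists (x0 + Rabs M / s). intros x Hx. apply HM.
  assert (Rabs M / s * s = Rabs M) by (field; lra).
  assert (M <= Rabs M) by apply RRle_abs.
  assert (Rabs M / s < x - x0) by lra.
  nra.
Qed.

Lemma lin_m s x0 : 0 < s -> is_lim (fun x => s * (x - x0)) m_infty m_infty.
Proof.
  intros Hs P [M HM]. exists (x0 - Rabs M / s). intros x Hx. apply HM.
  assert (Rabs M / s * s = Rabs M) by (field; lra).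
  assert (- M <= Rabs M) by (rewrite <- Rabs_Ropp; apply RRle_abs).
  assert (x - x0 < - (Rabs M / s)) by lra.
  nra.
Qed.

Definition HA (c k1 s1 x1 k2 s2 x2 : R) (x : R) :=
  c * (k1 * atan (s1 * (x - x1)) + k2 * atan (s2 * (x - x2))).
Definition hA (c k1 s1 x1 k2 s2 x2 : R) (x : R) :=
  c * (k1 * s1 / (1 + (s1 * (x - x1)) ^ 2) + k2 * s2 / (1 + (s2 * (x - x2)) ^ 2)).

Lemma HA_p c k1 s1 x1 k2 s2 x2 : 0 < s1 -> 0 < s2 ->
  filterlim (HA c k1 s1 x1 k2 s2 x2) (Rbar_locally p_infty) (locally (c * (k1 * (PI/2) + k2 * (PI/2)))).
Proof.
  intros H1 H2.
  apply (is_lim_scal_l (fun x => k1 * atan (s1 * (x - x1)) + k2 * atan (s2 * (x - x2))) c p_infty (k1 * (PI/2) + k2 * (PI/2))).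
  apply is_lim_plus'; apply (is_lim_scal_l _ _ p_infty (PI/2)).
  eapply is_lim_comp. apply atan_p. apply lin_p; auto. exists 0; intros; discriminate.
  eapply is_lim_comp. apply atan_p. apply lin_p; auto. exists 0; intros; discriminate.
Qed.

Lemma HA_m c k1 s1 x1 k2 s2 x2 : 0 < s1 -> 0 < s2 ->
  filterlim (HA c k1 s1 x1 k2 s2 x2) (Rbar_locally m_infty) (locally (c * (k1 * (-(PI/2)) + k2 * (-(PI/2))))).
Proof.
  intros H1 H2.
  apply (is_lim_scal_l (fun x => k1 * atan (s1 * (x - x1)) + k2 * atan (s2 * (x - x2))) c m_infty (k1 * (-(PI/2)) + k2 * (-(PI/2)))).
  apply is_lim_plus'; apply (is_lim_scal_l _ _ m_infty (-(PI/2))).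
  eapply is_lim_comp. apply atan_m. apply lin_m; auto. exists 0; intros; discriminate.
  eapply is_lim_comp. apply atan_m. apply lin_m; auto. exists 0; intros; discriminate.
Qed.

Lemma HA_der c k1 s1 x1 k2 s2 x2 x :
  is_derive (HA c k1 s1 x1 k2 s2 x2) x (hA c k1 s1 x1 k2 s2 x2 x).
Proof.
  unfold HA, hA. auto_derive. exact I.
  assert (0 < 1 + (s1 * (x - x1)) ^ 2) by (pose proof (pow2_ge_0 (s1 * (x - x1))); lra).
  assert (0 < 1 + (s2 * (x - x2)) ^ 2) by (pose proof (pow2_ge_0 (s2 * (x - x2))); lra).
  field. split; lra.
Qed.

Lemma hA_cont c k1 s1 x1 k2 s2 x2 x : continuous (hA c k1 s1 x1 k2 s2 x2) x.
Proof.
  apply (ex_derive_continuous (K:=R_AbsRing) (V:=R_NormedModule)).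
  unfold hA. auto_derive.
  assert (0 < 1 + (s1 * (x - x1)) ^ 2) by (pose proof (pow2_ge_0 (s1 * (x - x1))); lra).
  assert (0 < 1 + (s2 * (x - x2)) ^ 2) by (pose proof (pow2_ge_0 (s2 * (x - x2))); lra).
  simpl in H, H0. repeat split; try exact I; nra.
Qed.


Lemma tanh_der y : is_derive Defs.tanh y (1 - Defs.tanh y ^ 2).
Proof.
  unfold Defs.tanh. pose proof (exp_pos y). pose proof (exp_pos (-y)).
  auto_derive; unfold cosh, sinh; simpl in *. lra.
  field. lra.
Qed.

Lemma Derive_tanh y : Derive Defs.tanh y = 1 - Defs.tanh y ^ 2.
Proof. apply is_derive_unique, tanh_der. Qed.

Lemma Derive2_tanh y : Derive_n Defs.tanh 2 y = - 2 * Defs.tanh y * (1 - Defs.tanh y ^ 2).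
Proof.
  simpl. rewrite (Derive_ext _ (fun x => 1 - Defs.tanh x ^ 2)) by (intros; apply Derive_tanh).
  apply is_derive_unique.
  unfold Defs.tanh. pose proof (exp_pos y). pose proof (exp_pos (-y)).
  auto_derive; unfold cosh, sinh; simpl in *. lra.
  field. lra.
Qed.


Lemma exp_sq u : 0 <= u -> (1 + u/2)^2 <= exp u.
Proof.
  intros Hu. replace u with (u/2 + u/2) at 2 by field. rewrite exp_plus.
  pose proof (exp_ineq1_le (u/2)). nra.
Qed.

Lemma tanh_bounds z : Rabs (Defs.tanh z) <= 1 /\ 0 <= 1 - Defs.tanh z ^ 2 /\
  (1 - Defs.tanh z ^ 2) * (1 + Rabs z / 2) ^ 4 <= 4.
Proof.
  unfold Defs.tanh.
  pose proof (exp_pos z) as Hp. pose proof (exp_pos (-z)) as Hq.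
  assert (Hpq : exp z * exp (-z) = 1) by (rewrite <- exp_plus; replace (z + - z) with 0 by ring; apply exp_0).
  set (p := exp z) in *. set (q := exp (-z)) in *.
  assert (HS : 0 < p + q) by lra.
  assert (E : 1 - ((p - q) / (p + q)) ^ 2 = 4 / (p + q) ^ 2).
  { replace (4 / (p + q) ^ 2) with (4 * (p * q) / (p + q) ^ 2) by (rewrite Hpq, Rmult_1_r; reflexivity). field. lra. }
  rewrite E.
  assert (HQ : (1 + Rabs z / 2) ^ 2 <= p + q).
  { destruct (Rle_or_lt 0 z) as [Hz|Hz].
    - rewrite Rabs_right by lra. pose proof (exp_sq z Hz). fold p in H. lra.
    - rewrite Rabs_left by lra. pose proof (exp_sq (-z) ltac:(lra)). fold q in H. lra. }
  assert (0 <= Rabs z) by apply Rabs_pos.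
  split; [|split].
  - unfold Rdiv. rewrite Rabs_mult, Rabs_inv, (Rabs_right (p+q)) by lra.
    apply (Rmult_le_reg_r (p + q)); auto.
    rewrite Rmult_assoc, Rinv_l by lra. rewrite Rmult_1_r, Rmult_1_l.
    apply Rabs_le; lra.
  - apply Rlt_le, Rdiv_lt_0_compat; [lra | apply pow_lt; lra].
  - assert (A : ((1 + Rabs z / 2) ^ 2) ^ 2 <= (p + q) ^ 2).
    { apply pow_incr. split; [apply pow_le; lra | exact HQ]. }
    replace ((1 + Rabs z / 2) ^ 4) with (((1 + Rabs z / 2) ^ 2) ^ 2) by ring.
    unfold Rdiv. rewrite Rmult_comm, <- Rmult_assoc.
    apply (Rmult_le_reg_r ((p+q)^2)). apply pow_lt; lra.
    rewrite Rmult_assoc, Rinv_l by (apply pow_nonzero; lra). nra.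
Qed.

Lemma d_bounds z : let d := 1 - Defs.tanh z ^ 2 in
  Rabs (Defs.tanh z) <= 1 /\ 0 <= d /\ d * (1 + z^2) <= 4 /\
  Rabs z * d * (1 + z^2) <= 8 /\ z^2 * d * (1 + z^2) <= 64.
Proof.
  intros d. destruct (tanh_bounds z) as [H1 [H2 H3]]. fold d in H2, H3.
  set (w := Rabs z) in *. assert (Hw : 0 <= w) by apply Rabs_pos.
  assert (Hz : z ^ 2 = w ^ 2) by (unfold w; rewrite RPow_abs; rewrite Rabs_right; [ring | apply Rle_ge, pow2_ge_0]).
  rewrite Hz.
  assert (P1 : 1 + w^2 <= (1 + w/2)^4) by nra.
  assert (P2 : w * (1 + w^2) <= 2 * (1 + w/2)^4) by nra.
  assert (P3 : w^2 * (1 + w^2) <= 16 * (1 + w/2)^4) by nra.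
  repeat split; auto; nra.
Qed.

Lemma gauss_bounds y : let E := exp (- (y ^ 2) / 2) in
  0 < E /\ E * (1 + y^2/2) <= 1 /\ Rabs y * E * (1 + y^2/2) <= 4.
Proof.
  intros E. set (u := y^2/2).
  assert (Hu : 0 <= u) by (unfold u; pose proof (pow2_ge_0 y); lra).
  assert (HE : E = / exp u) by (unfold E, u; rewrite <- exp_Ropp; f_equal; field).
  pose proof (exp_sq u Hu). pose proof (exp_pos u).
  set (w := Rabs y). assert (Hw : 0 <= w) by apply Rabs_pos.
  assert (Hy : u = w^2/2) by (unfold u, w; rewrite RPow_abs; rewrite Rabs_right; [ring | apply Rle_ge, pow2_ge_0]).
  assert (P : w * (1 + u) <= 4 * (1 + u/2)^2) by (rewrite Hy; nra).
  assert (HE0 : 0 < E) by (rewrite HE; apply Rinv_0_lt_compat; lra).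
  assert (HEe : E * exp u = 1) by (rewrite HE; field; lra).
  split; [exact HE0|split]; nra.
Qed.


Lemma le_div X K D : 0 < D -> X * D <= K -> X <= K / D.
Proof. intros HD H. apply (Rmult_le_reg_r D); auto. unfold Rdiv. rewrite Rmult_assoc, Rinv_l by lra. lra. Qed.

Local Notation th := Defs.tanh.

Lemma cont_th_expr (g : R -> R) x :
  ex_derive g x -> continuous g x.
Proof. apply (ex_derive_continuous (K:=R_AbsRing) (V:=R_NormedModule)). Qed.

Lemma pt1 a b x : 0 < a -> 0 < b ->
  let d := 1 - th (a * x) ^ 2 in
  let E := exp (- ((x - b) ^ 2) / 2) in
  Rabs ((th (a * x) + th (a * x) * d * a ^ 2 + d * a * x) * x) * E <=
  (4 + b) / (1 + (x - b) ^ 2 / 2) + (8 + 64 / a ^ 2) * a / (1 + (a * x) ^ 2).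
Proof.
  intros ha hb d E.
  destruct (d_bounds (a * x)) as [T1 [T2 [T3 [T4 T5]]]]. fold d in T1, T2, T3, T4, T5.
  destruct (gauss_bounds (x - b)) as [G1 [G2 G3]]. fold E in G1, G2, G3.
  set (T := th (a * x)) in *.
  set (z := a * x) in *.
  set (y := x - b) in *.
  assert (Hz : Rabs z = a * Rabs x) by (unfold z; rewrite Rabs_mult, Rabs_right by lra; ring).
  assert (Hx2 : z ^ 2 = a ^ 2 * x ^ 2) by (unfold z; ring).
  assert (HxA : Rabs x <= Rabs y + b).
  { replace x with (y + b) by (unfold y; ring). eapply Rle_trans. apply Rabs_triang.
    rewrite (Rabs_right b) by lra. lra. }
  assert (A : Rabs ((T + T * d * a ^ 2 + d * a * x) * x) <= Rabs x + d * a^2 * Rabs x + d * a * x ^ 2).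
  { rewrite Rabs_mult.
    assert (Rabs (T + T * d * a ^ 2 + d * a * x) <= 1 + d * a^2 + d * a * Rabs x).
    { eapply Rle_trans. apply Rabs_triang. eapply Rle_trans. apply Rplus_le_compat_r, Rabs_triang.
      rewrite !Rabs_mult. rewrite (Rabs_right d) by lra. rewrite (Rabs_right a) by lra.
      rewrite (Rabs_right (a ^ 2)) by (apply Rle_ge, pow_le; lra).
      assert (0 <= d * a^2) by (apply Rmult_le_pos; [lra| apply pow_le; lra]).
      nra. }
    assert (0 <= Rabs x) by apply Rabs_pos.
    assert (Rabs x * Rabs x = x ^ 2) by (rewrite <- Rabs_mult, Rabs_right; [ring| pose proof (pow2_ge_0 x); simpl in *; nra]).
    eapply Rle_trans. apply Rmult_le_compat_r; [assumption | eassumption].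
    replace (d * a * x ^ 2) with (d * a * (Rabs x * Rabs x)) by (rewrite H1; ring).
    lra. }
  assert (Hu : 0 < 1 + y ^ 2 / 2) by (pose proof (pow2_ge_0 y); lra).
  assert (Hzz : 0 < 1 + z ^ 2) by (pose proof (pow2_ge_0 z); lra).
  assert (B : Rabs x * E <= (4 + b) / (1 + y ^ 2 / 2)).
  { apply le_div; auto.
    assert (0 <= E * (1 + y ^ 2 / 2)) by (apply Rmult_le_pos; lra).
    assert (Rabs x * E * (1 + y ^ 2 / 2) <= (Rabs y + b) * (E * (1 + y ^ 2 / 2))).
    { rewrite Rmult_assoc. apply Rmult_le_compat_r; auto. }
    assert (b * (E * (1 + y ^ 2 / 2)) <= b * 1) by (apply Rmult_le_compat_l; lra).
    replace ((Rabs y + b) * (E * (1 + y ^ 2 / 2))) with (Rabs y * E * (1 + y ^ 2 / 2) + b * (E * (1 + y ^ 2 / 2))) in H0 by ring.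
    lra. }
  assert (C : d * a ^ 2 * Rabs x * E <= 8 * a / (1 + z ^ 2)).
  { apply le_div; auto.
    assert (d * a ^ 2 * Rabs x = a * (Rabs z * d)) by (rewrite Hz; ring).
    assert (E <= 1) by (pose proof (pow2_ge_0 y); nra).
    assert (0 <= Rabs z * d) by (apply Rmult_le_pos; [apply Rabs_pos | lra]).
    assert (Rabs z * d * (1 + z ^ 2) <= 8) by exact T4.
    replace (d * a ^ 2 * Rabs x * E * (1 + z ^ 2)) with (a * (Rabs z * d * (1 + z ^ 2)) * E) by (rewrite Hz; ring).
    assert (0 <= Rabs z * d * (1 + z ^ 2)) by (apply Rmult_le_pos; lra).
    assert (a * (Rabs z * d * (1 + z ^ 2)) * E <= a * (Rabs z * d * (1 + z ^ 2)) * 1) by (apply Rmult_le_compat_l; [apply Rmult_le_pos|]; lra).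
    assert (a * (Rabs z * d * (1 + z ^ 2)) <= a * 8) by (apply Rmult_le_compat_l; lra).
    lra. }
  assert (D : d * a * x ^ 2 * E <= 64 / a ^ 2 * a / (1 + z ^ 2)).
  { apply le_div; auto.
    assert (E <= 1) by (pose proof (pow2_ge_0 y); nra).
    assert (d * a * x ^ 2 = (z ^ 2 * d) / a) by (rewrite Hx2; field; lra).
    assert (64 / a ^ 2 * a = 64 / a) by (field; lra).
    assert (0 <= z ^ 2 * d) by (apply Rmult_le_pos; [apply pow2_ge_0 | lra]).
    assert (z ^ 2 * d / a * (1 + z^2) <= 64 / a).
    { unfold Rdiv. replace (z ^ 2 * d * / a * (1 + z ^ 2)) with (z ^ 2 * d * (1 + z ^ 2) * / a) by ring.
      apply Rmult_le_compat_r. apply Rlt_le, Rinv_0_lt_compat; lra. exact T5. }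
    assert (0 <= z ^ 2 * d / a) by (apply Rmult_le_pos; [lra | apply Rlt_le, Rinv_0_lt_compat; lra]).
    rewrite H0, H1.
    replace (z ^ 2 * d / a * E * (1 + z ^ 2)) with (z ^ 2 * d / a * (1 + z ^ 2) * E) by ring.
    assert (0 <= z ^ 2 * d / a * (1 + z ^ 2)) by (apply Rmult_le_pos; lra).
    assert (z ^ 2 * d / a * (1 + z ^ 2) * E <= z ^ 2 * d / a * (1 + z ^ 2) * 1) by (apply Rmult_le_compat_l; lra).
    lra. }
  assert (Hsplit : (8 + 64 / a ^ 2) * a / (1 + z ^ 2) = 8 * a / (1 + z ^ 2) + 64 / a ^ 2 * a / (1 + z ^ 2)) by (field; lra).
  rewrite Hsplit.
  assert (0 <= d * a ^ 2 * Rabs x) by (apply Rmult_le_pos; [apply Rmult_le_pos; [lra | apply pow_le; lra] | apply Rabs_pos]).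
  nra.
Qed.

Lemma pt2 a b x : 0 < a ->
  let d := 1 - th (a * x) ^ 2 in
  let E := exp (- ((x - b) ^ 2) / 2) in
  d * a * E <= 4 * a / (1 + (a * x) ^ 2).
Proof.
  intros ha d E.
  destruct (d_bounds (a * x)) as [T1 [T2 [T3 [T4 T5]]]]. fold d in T1, T2, T3, T4, T5.
  destruct (gauss_bounds (x - b)) as [G1 [G2 G3]]. fold E in G1, G2, G3.
  assert (Hzz : 0 < 1 + (a * x) ^ 2) by (pose proof (pow2_ge_0 (a * x)); lra).
  assert (E <= 1) by (pose proof (pow2_ge_0 (x - b)); nra).
  apply le_div; auto.
  replace (d * a * E * (1 + (a * x) ^ 2)) with (a * (d * (1 + (a * x) ^ 2)) * E) by ring.
  assert (0 <= d * (1 + (a * x) ^ 2)) by (apply Rmult_le_pos; lra).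
  assert (a * (d * (1 + (a * x) ^ 2)) * E <= a * (d * (1 + (a * x) ^ 2)) * 1) by (apply Rmult_le_compat_l; [apply Rmult_le_pos|]; lra).
  assert (a * (d * (1 + (a * x) ^ 2)) <= a * 4) by (apply Rmult_le_compat_l; lra).
  lra.
Qed.

Lemma sqrt2_facts : 0 < sqrt 2 /\ sqrt 2 ^ 2 = 2.
Proof.
  split. apply sqrt_lt_R0; lra.
  simpl. rewrite Rmult_1_r. apply sqrt_sqrt; lra.
Qed.

Lemma c_pos : 0 < / sqrt (2 * PI).
Proof. apply Rinv_0_lt_compat, sqrt_lt_R0. pose proof PI_RGT_0; lra. Qed.

Lemma I1_bound a b : 0 < a -> 0 < b ->
  Rabs (gauss_expect b (fun x =>
      (th (a * x) - / 2 * Derive_n th 2 (a * x) * a ^ 2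
        + Derive th (a * x) * a * x) * x))
  <= / sqrt (2 * PI) * PI * ((4 + b) * sqrt 2 + (8 + 64 / a ^ 2)).
Proof.
  intros ha hb. unfold gauss_expect.
  destruct sqrt2_facts as [Hr Hr2]. pose proof c_pos as Hc.
  set (c := / sqrt (2 * PI)) in *.
  eapply Rle_trans.
  apply (dom_bound _ (hA c ((4 + b) * sqrt 2) (/ sqrt 2) b (8 + 64 / a ^ 2) a 0)
                     (HA c ((4 + b) * sqrt 2) (/ sqrt 2) b (8 + 64 / a ^ 2) a 0)).
  - intros x.
    apply continuous_ext with (f := fun x => (th (a * x) + th (a * x) * (1 - th (a * x) ^ 2) * a ^ 2
        + (1 - th (a * x) ^ 2) * a * x) * x * (c * exp (- ((x - b) ^ 2) / 2))).
    { intros t. unfold gauss_density. rewrite Derive_tanh, Derive2_tanh. fold c. match goal with |- ?A = ?B => change (@eq R A B) end. field. }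
    apply cont_th_expr. unfold Defs.tanh. auto_derive.
    pose proof (exp_pos (a * x)). pose proof (exp_pos (- (a * x))).
    unfold cosh. repeat split; try exact I; lra.
  - intros; apply hA_cont.
  - intros; apply HA_der.
  - intros x. rewrite Derive_tanh, Derive2_tanh. unfold gauss_density. fold c.
    pose proof (pt1 a b x ha hb) as P. simpl in P.
    set (T := th (a * x)) in *.
    set (E := exp (- ((x - b) ^ 2) / 2)) in *.
    assert (HE : 0 < E) by apply exp_pos.
    replace ((T - / 2 * (- 2 * T * (1 - T ^ 2)) * a ^ 2 + (1 - T ^ 2) * a * x) * x * (c * E))
      with (c * (((T + T * (1 - T ^ 2) * a ^ 2 + (1 - T ^ 2) * a * x) * x) * E)) by field.
    rewrite Rabs_mult, (Rabs_right c) by lra.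
    rewrite Rabs_mult, (Rabs_right E) by lra.
    unfold hA.
    replace ((/ sqrt 2 * (x - b)) ^ 2) with ((x - b) ^ 2 / 2)
      by (rewrite Rpow_mult_distr, pow_inv, Hr2; field).
    replace ((4 + b) * sqrt 2 * / sqrt 2) with (4 + b) by (field; lra).
    replace (a * (x - 0)) with (a * x) by ring.
    apply Rmult_le_compat_l; [lra|].
    simpl. simpl in P. exact P.
  - apply HA_m. apply Rinv_0_lt_compat; lra. exact ha.
  - apply HA_p. apply Rinv_0_lt_compat; lra. exact ha.
  - right. field. lra.
Qed.

Lemma I2_bound a b : 0 < a ->
  Rabs (gauss_expect b (fun x => Derive th (a * x) * a))
  <= / sqrt (2 * PI) * PI * 4.
Proof.
  intros ha. unfold gauss_expect.
  pose proof c_pos as Hc.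
  set (c := / sqrt (2 * PI)) in *.
  eapply Rle_trans.
  apply (dom_bound _ (hA c 0 1 0 4 a 0) (HA c 0 1 0 4 a 0)).
  - intros x.
    apply continuous_ext with (f := fun x => (1 - th (a * x) ^ 2) * a * (c * exp (- ((x - b) ^ 2) / 2))).
    { intros t. unfold gauss_density. rewrite Derive_tanh. fold c. reflexivity. }
    apply cont_th_expr. unfold Defs.tanh. auto_derive.
    pose proof (exp_pos (a * x)). pose proof (exp_pos (- (a * x))).
    unfold cosh. repeat split; try exact I; lra.
  - intros; apply hA_cont.
  - intros; apply HA_der.
  - intros x. rewrite Derive_tanh. unfold gauss_density. fold c.
    pose proof (pt2 a b x ha) as P. simpl in P.
    destruct (d_bounds (a * x)) as [T1 [T2 _]].
    set (T := th (a * x)) in *.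
    set (E := exp (- ((x - b) ^ 2) / 2)) in *.
    assert (HE : 0 < E) by apply exp_pos.
    replace ((1 - T ^ 2) * a * (c * E)) with (c * ((1 - T ^ 2) * a * E)) by ring.
    rewrite Rabs_mult, (Rabs_right c) by lra.
    rewrite Rabs_right.
    2: { apply Rle_ge. apply Rmult_le_pos; [apply Rmult_le_pos|]; simpl in T2; lra. }
    unfold hA.
    replace (a * (x - 0)) with (a * x) by ring.
    replace (0 * 1 / (1 + (1 * (x - 0)) ^ 2)) with 0 by (field; pose proof (pow2_ge_0 (1 * (x - 0))); lra).
    rewrite Rplus_0_l.
    apply Rmult_le_compat_l; [lra|].
    simpl. simpl in P. exact P.
  - apply HA_m; lra.
  - apply HA_p; lra.
  - right. field.
Qed.

Theorem lemmaF4 (a b : R) (ha : 0 < a) (hb : 0 < b)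
  (h1 : 30 <= a) (h2 : a <= 4 / 3 * b) :
  Rabs (U a b) <= (a + b) / 10.
Proof.
  pose proof (I1_bound a b ha hb) as B1.
  pose proof (I2_bound a b ha) as B2.
  unfold U.
  set (I2 := gauss_expect b (fun x => Derive th (a * x) * a)) in *.
  set (I1 := gauss_expect b _) in *.
  destruct sqrt2_facts as [Hr Hr2]. pose proof c_pos as Hc.
  set (c := / sqrt (2 * PI)) in *.
  set (r := sqrt 2) in *.
  pose proof PI_RGT_0 as Hpi. pose proof PI_4 as Hpi4.
  assert (Hc2 : c * c * (2 * PI) = 1).
  { unfold c. rewrite <- Rinv_mult, sqrt_sqrt by lra. field. lra. }
  assert (HX : c * PI * r <= 2).
  { assert (0 <= c * PI * r) by (apply Rmult_le_pos; [apply Rmult_le_pos|]; lra).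
    assert ((c * PI * r) * (c * PI * r) = PI) by (replace ((c * PI * r) * (c * PI * r)) with (c * c * (2 * PI) * (PI * (r ^ 2 / 2))) by field; rewrite Hc2, Hr2; field).
    nra. }
  assert (HY : c * PI <= 3 / 2).
  { assert (0 <= c * PI) by (apply Rmult_le_pos; lra).
    assert ((c * PI) * (c * PI) = PI / 2) by (replace ((c * PI) * (c * PI)) with (c * c * (2 * PI) * (PI / 2)) by field; rewrite Hc2; ring).
    nra. }
  assert (Ha2 : 64 / a ^ 2 <= 1 / 10).
  { assert (0 < a ^ 2) by (apply pow_lt; lra).
    unfold Rdiv. apply Rmult_le_reg_r with (a ^ 2); auto.
    rewrite Rmult_assoc, Rinv_l by lra. nra. }
  assert (K1 : c * PI * ((4 + b) * r + (8 + 64 / a ^ 2)) <= 2 * (4 + b) + 3 / 2 * (8 + 1 / 10)).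
  { replace (c * PI * ((4 + b) * r + (8 + 64 / a ^ 2))) with ((c * PI * r) * (4 + b) + (c * PI) * (8 + 64 / a ^ 2)) by ring.
    assert (0 <= 64 / a ^ 2) by (apply Rlt_le, Rdiv_lt_0_compat; [lra | apply pow_lt; lra]).
    assert (0 <= c * PI) by (apply Rmult_le_pos; lra).
    assert (0 <= c * PI * r) by (apply Rmult_le_pos; lra).
    apply Rplus_le_compat; apply Rmult_le_compat; lra. }
  assert (K2 : c * PI * 4 <= 6) by lra.
  destruct (Rabs_le_between I1 (Rabs I1)) as [L1 _].
  destruct (L1 (Rle_refl _)) as [L1a L1b].
  destruct (Rabs_le_between I2 (Rabs I2)) as [L2 _].
  destruct (L2 (Rle_refl _)) as [L2a L2b].
  unfold eta. apply Rabs_le. split; lra.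
Qed.
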